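(* Let $\widehat{\mathcal T}^{bin}_{pl}$ be the completion (formal infinite sums, graded by number of internal vertices) of the linear span over a field $k$ of characteristic zero of planar binary trees, with the associative product $*$ described in the context, and let $\tau_l^{(n)}$ be the left comb with $n$ internal vertices. Put $X:=|+\sum_{n\ge1}\tau_l^{(n)}$. Then $$\log^*(X)=\sum_{n>0}\frac1n\sum_{t\ \text{planar binary},\ |t|=n}\frac{(-1)^{d(t)}}{\binom{n-1}{d(t)}}\,t,$$ where $|t|$ is the number of internal vertices of $t$ and $d(t)$ its number of descents.
   Context: A planar binary tree is a finite planar rooted tree in which every internal vertex has exactly two incoming edges (a left one and a right one) and one outgoing edge; leaves are the external incoming edges, and there is one root edge. The tree with no internal vertex is the single edge $|$. For planar binary trees $t_1,t_2$, $t_1\vee t_2$ is the tree obtained by grafting $t_1$ and $t_2$ as left and right subtrees on a new root vertex; every tree $t\ne|$ decomposes uniquely as $t=t_1\vee t_2$. Extend $\vee$ bilinearly. The product $*$ is the bilinear product defined recursively by $|*t=t*|=t$ and, for $s=s_1\vee s_2$, $t=t_1\vee t_2$, $s*t=s_1\vee(s_2*t)+(s*t_1)\vee t_2$; it is associative with unit $|$ and additive in the number of internal vertices, so it extends to the completion. Left combs: $\tau_l^{(0)}=|$, $\tau_l^{(n+1)}=\tau_l^{(n)}\vee|$. For $L$ with no degree-$0$ component, $\log^*(|+L):=\sum_{k\ge1}\frac{(-1)^{k+1}}{k}L^{*k}$. A leaf of a planar binary tree is a descent if it is not the leftmost leaf and it points to the left, i.e. it is the left incoming edge of its internal vertex.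 *)

(* Defs.v *)
From HB Require Import structures.
From mathcomp Require Import all_boot all_order all_algebra.
Set Implicit Arguments. Unset Strict Implicit. Unset Printing Implicit Defensive.
Import Order.TTheory GRing.Theory Num.Theory.

(* Planar binary trees: [Leaf] is the single edge |, [Node t1 t2] = t1 \/ t2. *)
Inductive tree : Type := Leaf | Node of tree & tree.

Fixpoint tree_eqb (s t : tree) : bool :=
  match s, t with
  | Leaf, Leaf => true
  | Node s1 s2, Node t1 t2 => tree_eqb s1 t1 && tree_eqb s2 t2
  | _, _ => false
  end.

Lemma tree_eqP : Equality.axiom tree_eqb.
Proof.
elim=> [|s1 IH1 s2 IH2] [|t1 t2] /=; try by constructor.
by apply: (iffP andP) => [[/IH1 -> /IH2 ->]|[<- <-]]; split; [apply/IH1|apply/IH2].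
Qed.

HB.instance Definition _ := hasDecEq.Build tree tree_eqP.

Fixpoint nint (t : tree) : nat :=
  match t with Leaf => 0 | Node a b => (nint a + nint b).+1 end.

(* The product s * t of two trees, as the multiset (list) of trees in the
   expansion (all coefficients are 1):
   | * t = t, s * | = s,
   (s1 \/ s2) * (t1 \/ t2) = s1 \/ (s2 * t) + (s * t1) \/ t2. *)
Fixpoint tprod (s : tree) : tree -> seq tree :=
  fix aux (t : tree) : seq tree :=
    match s with
    | Leaf => [:: t]
    | Node s1 s2 =>
      match t with
      | Leaf => [:: s]
      | Node t1 t2 =>
          [seq Node s1 u | u <- tprod s2 t] ++ [seq Node u t2 | u <- aux t1]
      end
    end.

Fixpoint trees_le (n : nat) : seq tree :=
  match n with
  | 0 => [:: Leaf]
  | n'.+1 => Leaf :: [seq Node p.1 p.2 |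
                        p <- [seq (a, b) | a <- trees_le n', b <- trees_le n']
                        & (nint p.1 + nint p.2 <= n')%N]
  end.

Fixpoint lcomb (n : nat) : tree :=
  match n with 0 => Leaf | n'.+1 => Node (lcomb n') Leaf end.

(* Descents: leaves that are not the leftmost leaf and are the left incoming
   edge of their vertex. [lm] records whether we are on the leftmost branch. *)
Fixpoint desc_aux (lm : bool) (t : tree) : nat :=
  match t with
  | Leaf => 0
  | Node a b => ((a == Leaf) && ~~ lm) + desc_aux lm a + desc_aux false b
  end.
Definition descents (t : tree) : nat := desc_aux true t.

Section Series.
Local Open Scope ring_scope.
Variable R : fieldType.

(* The completion: formal (possibly infinite) sums, given by their
   coefficient functions. *)
Definition series := tree -> R.

Definition sone : series := fun t => (t == Leaf)%:R.

(* bilinear extension of * to the completion; only pairs with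
   |u| + |v| = |t| contribute, and they all lie in trees_le |t|. *)
Definition smul (f g : series) : series := fun t =>
  \sum_(u <- trees_le (nint t)) \sum_(v <- trees_le (nint t))
     f u * g v * (count_mem t (tprod u v))%:R.

Definition spow (f : series) (k : nat) : series := iter k (smul f) sone.

(* log^*(| + L) = sum_{k>=1} (-1)^(k+1)/k L^{*k}, for L with no degree-0
   component; the coefficient of t in L^{*k} vanishes for k > |t|, so the
   coefficient of t of the (formal) infinite sum is the finite sum below. *)
Definition slog1p (L : series) : series := fun t =>
  \sum_(1 <= k < (nint t).+1) ((-1) ^+ k.+1 / k%:R) * spow L k t.

Definition Xcomb : series := fun t => (t == lcomb (nint t))%:R.

Definition logstar (F : series) : series := slog1p (fun t => F t - sone t).

End Series.

(* Main.v *)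
Require Import Defs.
From mathcomp Require Import all_boot all_order all_algebra.
From mathcomp Require Import zify ring lra.
Import GRing.Theory Num.Theory.

Lemma mem_trees_le n u : (u \in trees_le n) = (nint u <= n)%N.
Proof.
elim: n u => [|n IH] [|a b] //=.
rewrite in_cons /=; apply/idP/idP.
  case/mapP => [[x y]]; rewrite mem_filter /= => /andP [H1 _] [-> ->]; lia.
move=> H; apply/mapP; exists (a, b) => //; rewrite mem_filter /=.
apply/andP; split; first lia.
apply/allpairsP; exists (a, b); rewrite /= !IH; split => //; lia.
Qed.

Lemma uniq_trees_le n : uniq (trees_le n).
Proof.
elim: n => [|n IH] //=; apply/andP; split.
  by apply/mapP => -[[x y]].
rewrite map_inj_uniq; last by move=> [a b] [c d] /= [-> ->].
rewrite filter_uniq // allpairs_uniq //; by move=> [a b] [c d] _ _ /= [-> ->].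
Qed.

Fixpoint lf (x : bool) (t : tree) : seq bool :=
  match t with Leaf => [:: x] | Node a b => lf true a ++ lf false b end.
Definition desw t := behead (lf true t).

Lemma lf_cons x t : lf x t = (if t is Leaf then x else true) :: desw t.
Proof.
rewrite /desw; elim: t x => [|a IHa b IHb] x //=.
have -> : lf true a = true :: behead (lf true a) by rewrite {1}(IHa true); case: (a).
by [].
Qed.

Lemma desw_node a b : desw (Node a b) = desw a ++ (b != Leaf) :: desw b.
Proof. by rewrite /desw /= (lf_cons true a) (lf_cons false b); case: b. Qed.

Lemma desw_leaf : desw Leaf = [::]. Proof. by []. Qed.

Lemma size_desw t : size (desw t) = nint t.
Proof. elim: t => [|a IHa b IHb] //; rewrite desw_node size_cat /= IHa IHb; lia. Qed.

Lemma desc_false t : desc_aux false t = count id (lf false t).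
Proof.
elim: t => [|a IHa b IHb] //=; rewrite count_cat IHa IHb !lf_cons /=.
by case: a {IHa} => //=; rewrite !addnA.
Qed.

Lemma descents_desw t : descents t = count id (desw t).
Proof.
rewrite /descents; elim: t => [|a IHa b IHb] //=.
by rewrite desw_node count_cat -IHa desc_false lf_cons andbF; by case: b IHb.
Qed.

Lemma desw_lcomb j : desw (lcomb j) = nseq j false.
Proof. elim: j => [|j IH] //=; rewrite desw_node IH /=; by elim: j {IH}=> //= j ->. Qed.

Lemma nint_lcomb j : nint (lcomb j) = j.
Proof. elim: j => //= j ->; lia. Qed.

Lemma allF_lcomb t : all negb (desw t) -> t = lcomb (nint t).
Proof.
elim: t => [|a IHa b IHb] //; rewrite desw_node all_cat /= => /and3P [Ha Hb _].
case: b Hb {IHb} => //= _; rewrite (IHa Ha) nint_lcomb; by rewrite addn0.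
Qed.

Lemma last_desw t : desw t != [::] -> last true (desw t) = false.
Proof.
elim: t => [|a IHa b IHb] //= _; rewrite desw_node last_cat /=.
case: b IHb => [|c d] IHb //=; move: IHb; rewrite desw_node !last_cat /= => ->//; by case: (desw c).
Qed.

Fixpoint dec (j : nat) (t : tree) : option tree :=
  match t with
  | Leaf => None
  | Node a b => if a == lcomb j then Some b
                else omap (fun v1 => Node v1 b) (dec j a)
  end.

Lemma dec_nint j t v : dec j t = Some v -> nint t = (j + nint v).+1.
Proof.
elim: t v => [|a IHa b IHb] v //=.
case: eqP => [-> [<-]|_]; first by rewrite nint_lcomb.
case: (dec j a) IHa => //= v1 /(_ v1 erefl) -> [<-] /=; lia.
Qed.

Lemma tprod_lcomb j v : tprod (lcomb j.+1) v =
  Node (lcomb j) v :: (if v is Node v1 v2 then [seq Node u v2 | u <- tprod (lcomb j.+1) v1] else [::]).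
Proof. by case: v. Qed.

Lemma node_eq a b c d : (Node a b == Node c d) = (a == c) && (b == d).
Proof. by []. Qed.

Lemma some_eq (x y : tree) : (Some x == Some y) = (x == y).
Proof. by apply/eqP/eqP => [[->]|->]. Qed.

Lemma cnt_cons (x y : tree) s : count_mem x (y :: s) = (y == x) + count_mem x s.
Proof. by []. Qed.

Lemma count_ins j v t : count_mem t (tprod (lcomb j.+1) v) = (dec j t == Some v).
Proof.
elim: v t => [|v1 IH1 v2 IH2] t; rewrite tprod_lcomb cnt_cons.
  rewrite /= addn0; case: t => [|a b] //=.
  case: (a =P lcomb j) => [->|ne]; first by case: b => [|c d]; rewrite ?eqxx // eqE /= andbF.
  have -> : (Node (lcomb j) Leaf == Node a b) = false.
    by apply/eqP => -[E _]; apply: ne.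
  by case: (dec j a).
rewrite count_map.
case: t => [|a b]; first by rewrite (@eq_count _ _ pred0) ?count_pred0.
set s := tprod _ v1.
have -> : count (preim (Node^~ v2) (pred1 (Node a b))) s = (v2 == b) * count_mem a s.
  rewrite /s; elim: (tprod _ v1) => /= [|u s' ->]; first by rewrite muln0.
  by rewrite node_eq; case: (u == a); case: (v2 == b); rewrite /= ?mul1n ?mul0n ?add0n.
rewrite /s IH1 /=.
case: (a =P lcomb j) => [->|ne].
  have -> : dec j (lcomb j) = None.
    case E: dec => [w|] //; move/dec_nint: E; rewrite nint_lcomb; lia.
  rewrite muln0 addn0 node_eq eqxx some_eq /=; by rewrite eq_sym.
have H : lcomb j != a by apply/eqP => E; apply: ne; rewrite E.
rewrite node_eq (negbTE H).
rewrite /= add0n; case: (dec j a) => [w|] /=; last by rewrite muln0.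
rewrite !some_eq node_eq (eq_sym b); by case: (w == v1); case: (v2 == b).
Qed.

Lemma dec_some j t v : dec j t = Some v -> exists c, desw t = nseq j false ++ c :: desw v.
Proof.
elim: t v => [|a IHa b IHb] v //=.
case: (a =P lcomb j) => [->|_].
  by move=> [<-]; exists (b != Leaf); rewrite desw_node desw_lcomb.
case: (dec j a) IHa => //= v1 /(_ v1 erefl) [c Hc] [<-].
by exists c; rewrite !desw_node Hc -catA.
Qed.

Lemma dec_none j t : (j < nint t)%N -> all negb (take j (desw t)) -> dec j t != None.
Proof.
elim: t => [|a IHa b IHb] //= Hj.
case: (a =P lcomb j) => [//|ne].
rewrite desw_node take_cat size_desw.
case: ltnP => Hja.
  by move=> H; case: (dec j a) (IHa Hja H).
rewrite all_cat => /andP [/allF_lcomb Ha].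
have Hlt : (nint a < j)%N.
  rewrite ltn_neqAle Hja andbT; apply/eqP => E; apply: ne; by rewrite Ha E.
case: b Hj {IHb} => [|c d] Hj.
  exfalso; move: Hj; rewrite /=; lia.
by rewrite (_ : j - nint a = (j - nint a).-1.+1) /=; last lia.
Qed.

Section Ser.
Local Open Scope ring_scope.
Variable R : fieldType.

Definition LL : series R := fun t => Xcomb R t - sone R t.

Lemma LL_val t : LL t = ((t == lcomb (nint t)) && (0 < nint t)%N)%:R.
Proof.
rewrite /LL /Xcomb /sone; case: t => [|a b] /=; first by rewrite subrr.
by rewrite subr0 andbT.
Qed.

Lemma perm_combs n : perm_eq [seq u <- trees_le n | (u == lcomb (nint u)) && (0 < nint u)%N]
                             [seq lcomb j.+1 | j <- iota 0 n].
Proof.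
apply: uniq_perm.
- by rewrite filter_uniq // uniq_trees_le.
- rewrite map_inj_uniq ?iota_uniq // => i j E.
  by have := congr1 nint E; rewrite !nint_lcomb => -[].
move=> u; apply/idP/idP.
  rewrite mem_filter mem_trees_le => /andP [/andP [/eqP E H0] Hn].
  apply/mapP; exists (nint u).-1; first by rewrite mem_iota; lia.
  rewrite {1}E; congr lcomb; lia.
case/mapP => j; rewrite mem_iota => Hj ->.
rewrite mem_filter mem_trees_le nint_lcomb eqxx /=; lia.
Qed.

Lemma spow_rec k t : spow LL k.+1 t =
  \sum_(j <- iota 0 (nint t)) (if dec j t is Some v then spow LL k v else 0).
Proof.
rewrite /spow iterS -/(spow LL k) /smul.
set g := spow LL k.
set H := fun u => \sum_(v <- trees_le (nint t)) g v * (count_mem t (tprod u v))%:R.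
rewrite (eq_bigr (fun u => if (u == lcomb (nint u)) && (0 < nint u)%N then H u else 0)); last first.
  move=> u _; rewrite LL_val /H.
  case: ifP => _; last by rewrite big1 // => v _; rewrite mul0r mul0r.
  by apply: eq_bigr => v _; rewrite mul1r.
rewrite -big_mkcond -big_filter (perm_big _ (perm_combs _)) big_map.
rewrite big_seq [RHS]big_seq; apply: eq_bigr => j; rewrite mem_iota add0n => /andP [_ Hj].
rewrite /H; under eq_bigr do rewrite count_ins.
case E: (dec j t) => [v0|]; last by rewrite big1 // => v _; rewrite mulr0.
have Hv0 : v0 \in trees_le (nint t).
  by rewrite mem_trees_le (@dec_nint j t v0 E); lia.
rewrite (bigD1_seq v0) ?uniq_trees_le //= eqxx mulr1 big1 ?addr0 // => v.
by rewrite some_eq eq_sym => /negbTE ->; rewrite mulr0.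
Qed.
End Ser.

Fixpoint FF (k : nat) (w : seq bool) : nat :=
  match k with
  | 0 => (w == [::])
  | k'.+1 => \sum_(i <- iota 0 (size w)) all negb (take i w) * FF k' (drop i.+1 w)
  end.

Lemma spow_FF (R : fieldType) k t : spow (LL R) k t = ((FF k (desw t))%:R)%R.
Proof.
elim: k t => [|k IH] t.
  rewrite /spow /= /sone; case: t => [|a b] //=; rewrite desw_node; by case: (desw a).
rewrite spow_rec /= natr_sum size_desw big_seq [RHS]big_seq; apply: eq_bigr => j.
rewrite mem_iota add0n => /andP [_ Hj].
case E: (dec j t) => [v|].
  have [c Hc] := @dec_some j t v E.
  rewrite IH Hc take_size_cat ?size_nseq // all_nseq orbT mul1n.
  by rewrite -cat_rcons drop_size_cat // size_rcons size_nseq.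
case Hall: (all negb (take j (desw t))); last by rewrite mul0n.
by have := @dec_none j t Hj Hall; rewrite E.
Qed.

Lemma FF_cons k x w : FF k.+1 (x :: w) = FF k w + (~~ x) * FF k.+1 w.
Proof.
rewrite /= big_cons take0 /= mul1n drop0; congr addn.
rewrite (iotaDl 1 0) big_map big_distrr /=; apply: eq_bigr => i _.
by rewrite add0n add1n; case: (~~ x); rewrite ?mul1n ?mul0n.
Qed.

Lemma FF0_rcons w x : FF 0 (rcons w x) = 0.
Proof. by case: w. Qed.

Lemma FF_closed w0 k : FF k.+1 (rcons w0 false) =
  (count id w0 <= k) * 'C(size w0 - count id w0, k - count id w0).
Proof.
elim: w0 k => [|x w IH] k.
  by rewrite [rcons _ _]/= FF_cons; case: k => [|k]; rewrite /= ?big_nil.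
rewrite [rcons (x :: w) _]/= FF_cons IH.
have Hc := count_size id w.
case: k => [|k]; rewrite ?FF0_rcons ?IH; case: x; rewrite /= ?add0n ?add1n ?mul0n ?mul1n ?addn0 ?add0n.
all: try done.
  by case: (count id w) => [|c] //=; rewrite !bin0.
case: (ltngtP (count id w) k.+1) => H.
- have -> : k.+1 - count id w = (k - count id w).+1 by lia.
  have -> : (size w).+1 - count id w = (size w - count id w).+1 by lia.
  rewrite binS; have -> : count id w <= k = true by lia.
  by rewrite !mul1n addnC.
- have -> : count id w <= k = false by lia.
  by [].
- by rewrite H subnn !bin0 ltnn.
Qed.

Section Ident.
Local Open Scope ring_scope.
Variable R : fieldType.
Hypothesis chark : [pchar R] =i pred0.

Lemma natf_neq0 n : (n.+1%:R != 0 :> R).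
Proof. by rewrite (pcharf0P R).1. Qed.

Definition II a d : R := \sum_(0 <= i < a.+1) (-1) ^+ i * 'C(a, i)%:R / (i + d).+1%:R.
Definition JJ a d : R := (a`! * d`!)%:R / ((a + d).+1)`!%:R.

Lemma II_rec a d : II a.+1 d = II a d - II a d.+1.
Proof.
rewrite {1}/II big_nat_recl //.
under eq_bigr do rewrite binS natrD mulrDr mulrDl.
rewrite big_split /= addrA; congr (_ + _).
  rewrite /II [RHS]big_nat_recl // big_nat_recr //= (@bin_small a a.+1 (ltnSn a)) mulr0 mul0r addr0.
  by rewrite !bin0 addrC.
rewrite /II -sumrN; apply: eq_bigr => i _.
by rewrite exprS mulN1r !mulNr addSnnS.
Qed.

Lemma fact_neq0 n : (n`!%:R != 0 :> R).
Proof. by rewrite -(prednK (fact_gt0 n)) natf_neq0. Qed.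

Lemma JJ_rec a d : JJ a.+1 d = JJ a d - JJ a d.+1.
Proof.
rewrite /JJ !addSn !addnS !factS !natrM.
have h1 : (1 + (a + d))%:R != 0 :> R by rewrite add1n natf_neq0.
have h2 : (2 + (a + d))%:R != 0 :> R by rewrite add2n natf_neq0.
rewrite !natrD in h1 h2.
have h3 := fact_neq0 (a + d).
field; by rewrite h1 h2 h3.
Qed.

Lemma IJ a d : II a d = JJ a d.
Proof.
elim: a d => [|a IH] d.
  rewrite /II /JJ big_nat1 expr0 mul1r bin0 add0n fact0 mul1n factS natrM.
  have h : (1 + d)%:R != 0 :> R by rewrite add1n natf_neq0.
  rewrite natrD in h; field; by rewrite h fact_neq0.
by rewrite II_rec JJ_rec !IH.
Qed.

Lemma sum_main a d :
  \sum_(0 <= j < (a + d).+1) (-1) ^+ j / j.+1%:R * ((d <= j)%N * 'C(a, j - d))%:R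
  = (-1) ^+ d * II a d.
Proof.
rewrite (@big_cat_nat _ _ _ d) //=; last lia.
rewrite [X in X + _]big_nat_cond big1 ?add0r; last first.
  by move=> i /andP [/andP [_ H] _]; rewrite leqNgt H mul0n mulr0.
rewrite -{1}(add0n d) big_addn (_ : (a + d).+1 - d = a.+1)%N; last lia.
rewrite /II mulr_sumr; apply: eq_bigr => i _.
rewrite leq_addl mul1n addnK exprD.
have h : (1 + (i + d))%:R != 0 :> R by rewrite add1n natf_neq0.
rewrite !natrD in h; field; by rewrite h.
Qed.

Lemma final_eq a d : (-1) ^+ d * JJ a d =
  ((a + d).+1)%:R^-1 * ((-1) ^+ d / ('C(a + d, d))%:R).
Proof.
rewrite /JJ factS -(bin_fact (leq_addl a d)) addnK !natrM.
have hC : ('C(a + d, d))%:R != 0 :> R.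
  have hp : (0 < 'C(a + d, d))%N by rewrite bin_gt0 leq_addl.
  by rewrite -(prednK hp) natf_neq0.
have h : (1 + (a + d))%:R != 0 :> R by rewrite add1n natf_neq0.
rewrite !natrD in h.
field; by rewrite hC h !fact_neq0.
Qed.
End Ident.

Local Open Scope ring_scope.

Theorem corollary4p4 (k : fieldType) (chark : [pchar k] =i pred0) (t : tree) :
  logstar (Xcomb k) t =
  if nint t == 0%N then 0
  else (nint t)%:R^-1 * ((-1) ^+ descents t / ('C((nint t).-1, descents t))%:R).
Proof.
have E : logstar (Xcomb k) t =
    \sum_(1 <= j < (nint t).+1) ((-1) ^+ j.+1 / j%:R) * (FF j (desw t))%:R.
  rewrite /logstar /slog1p; apply: eq_bigr => j _; by rewrite -spow_FF.
rewrite E.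
case: eqP => [->|Hn]; first by rewrite big_geq.
move Ew: (desw t) => w; case/lastP: w Ew => [|w0 x] Ew.
  by have := size_desw t; rewrite Ew /= => H; exfalso; apply: Hn.
have Hx : x = false.
  have := @last_desw t; rewrite Ew last_rcons; apply; by case: w0 {Ew}.
subst x.
have Hsz : size w0 = (nint t).-1 by rewrite -size_desw Ew size_rcons.
have Hd : descents t = count id w0.
  by rewrite descents_desw Ew -cats1 count_cat /= !addn0.
have Hc := count_size id w0.
set d := count id w0 in Hd Hc.
set a := (size w0 - d)%N.
have Hn' : nint t = (a + d).+1 by rewrite /a; lia.
rewrite Hd Hn' big_add1 !succnK.
under eq_bigr => j _ do rewrite FF_closed !exprS !mulN1r opprK.
rewrite -/a (@sum_main k chark) (@IJ k chark). exact: final_eq.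
Qed.
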